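(* Let $\mathcal D[t]\subset\mathcal H\subset\mathcal D^\times[t^\times]$ be a rigged Hilbert space with $\mathcal D[t]$ a reflexive Fréchet space, $(X,\mu)$ a $\sigma$-finite measure space, $\omega,\theta$ Riesz distribution bases, and $m:X\to\mathbb C$ measurable such that $x\mapsto m(x)\langle f,\check\omega_x\rangle\langle\check\theta_x,g\rangle$ is integrable for all $f,g\in\mathcal H$. If there exists $C>0$ with $|m(x)|\ge C$ for all $x\in X$, then $M_{m,\omega,\theta}$ is injective and its inverse is bounded, i.e. there is $c>0$ with $\|M_{m,\omega,\theta}f\|\ge c\|f\|$ for all $f\in D(M_{m,\omega,\theta})$.
   Context: Rigged Hilbert space: $\mathcal D$ dense subspace of Hilbert space $\mathcal H$ with a locally convex topology finer than the norm topology, $\mathcal D^\times$ its conjugate dual, $\mathcal H\subset\mathcal D^\times$, pairing extending the inner product, $\langle f,F\rangle:=\overline{\langle F,f\rangle}$. Distribution frame: weakly measurable $\omega:X\to\mathcal D^\times$ with $A\|f\|^2\le\int_X|\langle f,\omega_x\rangle|^2d\mu\le B\|f\|^2$ for $f\in\mathcal D$. $\omega$ is $\mu$-independent if the only measurable $\xi$ with $\int_X\xi(x)\langle g,\omega_x\rangle d\mu=0$ for all $g\in\mathcal D$ is $\xi=0$ a.e. A Riesz distribution basis is a $\mu$-independent distribution frame. For such maps, $f\mapsto\langle f,\omega_\cdot\rangle$ extends by continuity to a bounded operator $\mathcal H\to L^2(X,\mu)$ and $\langle f,\check\omega_x\rangle$ denotes the value at $x$ of this extension applied to $f\in\mathcal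 H$; similarly for $\check\theta$. Distribution multiplier $M_{m,\omega,\theta}$: domain is the set of $f\in\mathcal D$ such that $\int_X m(x)\langle f,\omega_x\rangle\langle\theta_x,g\rangle d\mu$ converges for all $g\in\mathcal D$ and is bounded in $g$ w.r.t. the $\mathcal H$-norm; $M_{m,\omega,\theta}f\in\mathcal H$ is its Riesz representative. *)

(* Defs.v *)
From HB Require Import structures.
From mathcomp Require Import all_boot all_order all_algebra.
From mathcomp Require Import all_classical all_reals all_analysis.
From mathcomp Require Export complex.
Set Implicit Arguments. Unset Strict Implicit. Unset Printing Implicit Defensive.
Import Order.TTheory GRing.Theory Num.Theory.
Local Open Scope ring_scope.
Local Open Scope classical_set_scope.

Definition cabs (R : realType) (z : R[i]) : R :=
  Num.sqrt (complex.Re z ^+ 2 + complex.Im z ^+ 2).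

Section Hilbert.
Context {R : realType} {H : lmodType R[i]}.

Definition is_inner_product (ip : H -> H -> R[i]) : Prop :=
  [/\ forall (a : R[i]) (x y z : H), ip (a *: x + y) z = a * ip x z + ip y z,
      forall x y : H, ip y x = (ip x y)^*,
      forall x : H, 0 <= ip x x
    & forall x : H, ip x x = 0 -> x = 0].

Definition hnorm (ip : H -> H -> R[i]) (h : H) : R :=
  Num.sqrt (complex.Re (ip h h)).

Definition is_hilbert (ip : H -> H -> R[i]) : Prop :=
  is_inner_product ip /\
  forall u : nat -> H,
    (forall e : R, 0 < e -> exists N, forall k l, (N <= k)%N -> (N <= l)%N ->
        hnorm ip (u k - u l) < e) ->
    exists h : H, forall e : R, 0 < e -> exists N, forall k, (N <= k)%N ->
        hnorm ip (u k - h) < e.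
End Hilbert.

(* Fréchet spaces, presented by a countable separating family of        *)
(* seminorms p_0, p_1, ... (the topology t of D is the one generated by *)
(* them), complete for that family.                                      *)
Section Frechet.
Context {R : realType} {D : lmodType R[i]}.

Definition is_seminorm (s : D -> R) : Prop :=
  [/\ forall x, 0 <= s x,
      forall x y, s (x + y) <= s x + s y
    & forall (a : R[i]) x, s (a *: x) = cabs a * s x].

(* max of the first n+1 seminorms: basic continuous seminorms of t *)
Definition qmax (p : nat -> D -> R) (n : nat) (x : D) : R :=
  \big[Num.max/0]_(k < n.+1) p k x.

Definition is_frechet (p : nat -> D -> R) : Prop :=
  [/\ forall n, is_seminorm (p n),
      forall x, (forall n, p n x = 0) -> x = 0
    & forall u : nat -> D,
      (forall n (e : R), 0 < e -> exists N, forall k l, (N <= k)%N -> (N <= l)%N ->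
          qmax p n (u k - u l) < e) ->
      exists f : D, forall n (e : R), 0 < e -> exists N, forall k, (N <= k)%N ->
          qmax p n (u k - f) < e].

(* D^x : continuous conjugate-linear functionals on D[t].
   For F in D^x and f in D we write <F,f> := F f and <f,F> := (F f)^*. *)
Definition in_cdual (p : nat -> D -> R) (F : D -> R[i]) : Prop :=
  (forall (a : R[i]) x y, F (a *: x + y) = a^* * F x + F y) /\
  exists n (K : R), forall x, cabs (F x) <= K * qmax p n x.

Definition t_bounded (p : nat -> D -> R) (B : set D) : Prop :=
  forall n, exists K : R, forall x, B x -> qmax p n x <= K.

(* Reflexivity: every linear functional on D^x which is continuous for the
   strong dual topology t^x (uniform convergence on t-bounded sets) is the
   evaluation at some element of D.  (For Fréchet spaces, which are
   barrelled, semi-reflexivity is equivalent to reflexivity.) *)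
Definition is_reflexive (p : nat -> D -> R) : Prop :=
  forall Phi : (D -> R[i]) -> R[i],
    (forall (a : R[i]) F G, in_cdual p F -> in_cdual p G ->
        Phi (fun x => a * F x + G x) = a * Phi F + Phi G) ->
    (exists (B : set D) (K : R), t_bounded p B /\
       forall F, in_cdual p F -> forall r : R,
         (forall x, B x -> cabs (F x) <= r) -> cabs (Phi F) <= K * r) ->
    exists f : D, forall F, in_cdual p F -> Phi F = F f.
End Frechet.

(* Rigged Hilbert space D[t] ⊂ H ⊂ D^x[t^x]: D is identified with its    *)
(* image under the injective linear map iota : D -> H, which has dense   *)
(* range and is continuous from t to the norm topology (t is finer).     *)
Definition is_rigged (R : realType) (D H : lmodType R[i])
  (p : nat -> D -> R) (ip : H -> H -> R[i]) (iota : D -> H) : Prop :=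
  [/\ is_hilbert ip /\ is_frechet p,
      forall (a : R[i]) x y, iota (a *: x + y) = a *: iota x + iota y,
      injective iota,
      forall (h : H) (e : R), 0 < e -> exists f : D, hnorm ip (h - iota f) < e
    & exists n (K : R), forall f, hnorm ip (iota f) <= K * qmax p n f].

Section CInt.
Context {R : realType} {d : measure_display} {X : measurableType d}.

Definition cmeasurable (f : X -> R[i]) : Prop :=
  measurable_fun setT (fun x => complex.Re (f x)) /\
  measurable_fun setT (fun x => complex.Im (f x)).

Definition cintegrable (mu : {measure set X -> \bar R}) (f : X -> R[i]) : Prop :=
  mu.-integrable setT (fun x => (complex.Re (f x))%:E) /\
  mu.-integrable setT (fun x => (complex.Im (f x))%:E).

Definition cintegral (mu : {measure set X -> \bar R}) (f : X -> R[i]) : R[i] :=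
  Complex (Rintegral mu setT (fun x => complex.Re (f x)))
          (Rintegral mu setT (fun x => complex.Im (f x))).

Definition sqint (mu : {measure set X -> \bar R}) (f : X -> R[i]) : \bar R :=
  (\int[mu]_x ((cabs (f x)) ^+ 2)%:E)%E.
End CInt.

Section DistFrames.
Context {R : realType} {D H : lmodType R[i]}.
Context {d : measure_display} {X : measurableType d}.
Variables (p : nat -> D -> R) (ip : H -> H -> R[i]) (iota : D -> H).
Variable (mu : {measure set X -> \bar R}).

Definition is_distribution_frame (omega : X -> D -> R[i]) : Prop :=
  [/\ forall x, in_cdual p (omega x),
      forall f : D, cmeasurable (fun x => omega x f)
    & exists A B : R, [/\ 0 < A, 0 < B &
        forall f : D,
          ((A * hnorm ip (iota f) ^+ 2)%:E <= sqint mu (fun x => omega x f))%E /\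
          (sqint mu (fun x => omega x f) <= (B * hnorm ip (iota f) ^+ 2)%:E)%E]].

(* <g, omega_x> = (omega x g)^* *)
Definition mu_independent (omega : X -> D -> R[i]) : Prop :=
  forall xi : X -> R[i], cmeasurable xi ->
    (forall g : D,
       cintegrable mu (fun x => xi x * (omega x g)^*) /\
       cintegral mu (fun x => xi x * (omega x g)^*) = 0) ->
    {ae mu, forall x, xi x = 0}.

Definition is_riesz_distribution_basis (omega : X -> D -> R[i]) : Prop :=
  is_distribution_frame omega /\ mu_independent omega.

(* T is (a representative of) the bounded extension H -> L^2(X,mu) of
   f |-> <f, omega_.> = (omega_. f)^*; T h x plays the role of
   <h, check(omega)_x>.  Such T is unique up to mu-a.e. equality. *)
Definition is_analysis_extension (omega : X -> D -> R[i]) (T : H -> X -> R[i]) : Prop :=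
  [/\ forall f : D, {ae mu, forall x, T (iota f) x = (omega x f)^*},
      forall h : H, cmeasurable (T h),
      exists K : R, forall h : H, (sqint mu (T h) <= (K * hnorm ip h ^+ 2)%:E)%E
    & forall (a : R[i]) (h1 h2 : H),
        {ae mu, forall x, T (a *: h1 + h2) x = a * T h1 x + T h2 x}].

(* Distribution multiplier M_{m,omega,theta}:
   integrand x |-> m(x) <f,omega_x> <theta_x,g> *)
Definition mult_integrand (m : X -> R[i]) (omega theta : X -> D -> R[i])
  (f g : D) : X -> R[i] :=
  fun x => m x * (omega x f)^* * theta x g.

Definition in_mult_domain (m : X -> R[i]) (omega theta : X -> D -> R[i]) (f : D) : Prop :=
  (forall g : D, cintegrable mu (mult_integrand m omega theta f g)) /\
  exists K : R, forall g : D,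
    cabs (cintegral mu (mult_integrand m omega theta f g)) <= K * hnorm ip (iota g).

(* h = M_{m,omega,theta} f  (Riesz representative; unique by density) *)
Definition is_mult_value (m : X -> R[i]) (omega theta : X -> D -> R[i])
  (f : D) (h : H) : Prop :=
  forall g : D, ip h (iota g) = cintegral mu (mult_integrand m omega theta f g).
End DistFrames.

(* Main.v *)
Require Import Defs.
From HB Require Import structures.
From mathcomp Require Import all_boot all_order all_algebra.
From mathcomp Require Import all_classical all_reals all_analysis.
From mathcomp Require Import measurable_realfun.
From mathcomp Require Import complex ring lra.
Import Order.TTheory GRing.Theory Num.Theory.
Local Open Scope ring_scope.
Local Open Scope classical_set_scope.
Local Open Scope complex_scope.
Local Open Scope ring_scope.
Set Implicit Arguments. Unset Strict Implicit. Unset Printing Implicit Defensive.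
Set Default Proof Using "All".

Section Cx.
Variable R : realType.
Implicit Types z w : R[i].
Local Notation Re := complex.Re.
Local Notation Im := complex.Im.

Lemma cReM z w : Re (z * w) = Re z * Re w - Im z * Im w.
Proof. by case: z => a b; case: w => c d. Qed.
Lemma cImM z w : Im (z * w) = Re z * Im w + Im z * Re w.
Proof. case: z => a b; case: w => c d /=. ring. Qed.
Lemma cReJ z : Re (z^*) = Re z. Proof. by case: z. Qed.
Lemma cImJ z : Im (z^*) = - Im z. Proof. by case: z. Qed.
Lemma cReD z w : Re (z + w) = Re z + Re w. Proof. by case: z; case: w. Qed.
Lemma cImD z w : Im (z + w) = Im z + Im w. Proof. by case: z; case: w. Qed.
Lemma cReN z : Re (- z) = - Re z. Proof. by case: z. Qed.
Lemma cImN z : Im (- z) = - Im z. Proof. by case: z. Qed.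
Lemma cReB z w : Re (z - w) = Re z - Re w. Proof. by case: z; case: w. Qed.
Lemma cImB z w : Im (z - w) = Im z - Im w. Proof. by case: z; case: w. Qed.
Lemma cReRM (r : R) z : Re (r%:C * z) = r * Re z.
Proof. case: z => a b /=. ring. Qed.
Lemma cImRM (r : R) z : Im (r%:C * z) = r * Im z.
Proof. case: z => a b /=. ring. Qed.

Lemma cx_eq z w : Re z = Re w -> Im z = Im w -> z = w.
Proof. by case: z => a b; case: w => c d /= -> ->. Qed.

Lemma JK z : z^*^* = z.
Proof. by apply: cx_eq; rewrite ?cReJ ?cImJ ?opprK. Qed.
Lemma JD z w : (z + w)^* = z^* + w^*.
Proof. by apply: cx_eq; rewrite ?(cReJ,cImJ,cReD,cImD) // opprD. Qed.
Lemma JM z w : (z * w)^* = z^* * w^*.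
Proof. apply: cx_eq; rewrite ?(cReJ,cImJ,cReM,cImM) //; ring. Qed.
Lemma JN z : (- z)^* = - z^*.
Proof. by apply: cx_eq; rewrite ?(cReJ,cImJ,cReN,cImN). Qed.
Lemma JB z w : (z - w)^* = z^* - w^*.
Proof. by rewrite JD JN. Qed.
Lemma JR (r : R) : (r%:C)^* = r%:C.
Proof. by apply: cx_eq; rewrite ?(cReJ,cImJ) //= oppr0. Qed.
Lemma J0 : (0 : R[i])^* = 0. Proof. exact: (JR 0). Qed.

Lemma cabs_normc z : `|z| = (cabs z)%:C.
Proof. by rewrite normc_def. Qed.
Lemma cabs_ge0 z : 0 <= cabs z. Proof. exact: sqrtr_ge0. Qed.
Lemma cabs_sqr z : cabs z ^+ 2 = Re z ^+ 2 + Im z ^+ 2.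
Proof. by rewrite sqr_sqrtr // addr_ge0 // sqr_ge0. Qed.
Lemma cabsM z w : cabs (z * w) = cabs z * cabs w.
Proof. by apply: complexI; rewrite rmorphM /= -!cabs_normc normrM. Qed.
Lemma cabsD z w : cabs (z + w) <= cabs z + cabs w.
Proof. by rewrite -lecR rmorphD /= -!cabs_normc ler_normD. Qed.
Lemma cabsJ z : cabs (z^*) = cabs z.
Proof. by rewrite /cabs cReJ cImJ sqrrN. Qed.
Lemma cabsN z : cabs (- z) = cabs z.
Proof. by rewrite /cabs cReN cImN !sqrrN. Qed.
Lemma cabsR (r : R) : cabs (r%:C) = `|r|.
Proof. by rewrite /cabs /= expr0n /= addr0 sqrtr_sqr. Qed.
Lemma cabs_eq0 z : cabs z = 0 -> z = 0.
Proof. by move=> h; apply/eqP; rewrite -normr_eq0 cabs_normc h. Qed.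
Lemma cabs0 : cabs (0 : R[i]) = 0.
Proof. by rewrite cabsR normr0. Qed.
Lemma mulJ z : z * z^* = (cabs z ^+ 2)%:C.
Proof. apply: cx_eq; rewrite ?(cReJ,cImJ,cReM,cImM) cabs_sqr /=; ring. Qed.
Lemma Re_le_cabs z : `|Re z| <= cabs z.
Proof.
rewrite -(sqrtr_sqr (Re z)) ler_sqrt; last by rewrite addr_ge0 ?sqr_ge0.
by rewrite lerDl sqr_ge0.
Qed.
Lemma Im_le_cabs z : `|Im z| <= cabs z.
Proof.
rewrite -(sqrtr_sqr (Im z)) ler_sqrt; last by rewrite addr_ge0 ?sqr_ge0.
by rewrite lerDr sqr_ge0.
Qed.
Lemma cabs_le_ReIm z : cabs z <= `|Re z| + `|Im z|.
Proof.
have h1 : 0 <= `|Re z| + `|Im z| by rewrite addr_ge0.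
rewrite -[X in _ <= X](ger0_norm h1) -sqrtr_sqr /cabs ler_sqrt; last by rewrite sqr_ge0.
rewrite sqrrD -!normrX (ger0_norm (sqr_ge0 (Re z))) (ger0_norm (sqr_ge0 (Im z))).
have : 0 <= `|Re z| * `|Im z| *+ 2 by rewrite mulrn_wge0 // mulr_ge0.
lra.
Qed.
Lemma le0c z : (0 <= z) = ((Im z == 0) && (0 <= Re z)).
Proof. by rewrite lecE /= eq_sym. Qed.
Lemma ge0_real z : 0 <= z -> z = (Re z)%:C.
Proof. by rewrite le0c => /andP[/eqP h _]; apply: cx_eq. Qed.
Lemma iM_Re z : Re ('i * z) = - Im z.
Proof. case: z => a b /=; ring. Qed.
Lemma Ji : ('i : R[i])^* = - 'i.
Proof. by apply: cx_eq; rewrite ?cReJ ?cImJ ?cReN ?cImN //= oppr0. Qed.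
Lemma Re_neg_iM z : Re (- 'i * z) = Im z.
Proof. case: z => a b /=; ring. Qed.
End Cx.

Section RealAux.
Variable R : realType.
Lemma disc_le (A B c : R) : 0 <= A ->
  (forall t : R, 0 <= t ^+ 2 * A + 2 * t * c + B) -> c ^+ 2 <= A * B.
Proof.
move=> A0 h; have [Ap|] := ltrP 0 A.
  have := h (- c / A).
  have -> : (- c / A) ^+ 2 * A + 2 * (- c / A) * c + B = B - c ^+ 2 / A.
    by field; rewrite gt_eqF.
  rewrite subr_ge0 ler_pdivrMr // => hc; by rewrite mulrC.
move=> A0'; have A00 : A = 0 by apply/eqP; rewrite eq_le A0' A0.
subst A; rewrite mul0r; have [c0|c0] := eqVneq c 0; first by rewrite c0 expr0n.
have := h (- (B + 1) / (2 * c)).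
have -> : (- (B + 1) / (2 * c)) ^+ 2 * 0 + 2 * (- (B + 1) / (2 * c)) * c + B = -1.
  by field; rewrite c0.
by rewrite lerNr oppr0 ler10.
Qed.

Lemma lin_zero (A c : R) : 0 <= A ->
  (forall t : R, 0 <= t ^+ 2 * A + 2 * t * c) -> c = 0.
Proof.
move=> A0 h; have h' : forall t : R, 0 <= t ^+ 2 * A + 2 * t * c + 0.
  by move=> t; rewrite addr0; exact: h t.
have := @disc_le A 0 c A0 h'.
rewrite mulr0 => hc; apply/eqP; rewrite -sqrf_eq0 eq_le hc sqr_ge0 //.
Qed.

Lemma sqrt_le_of_sqr (x y : R) : 0 <= y -> x ^+ 2 <= y ^+ 2 -> x <= y.
Proof.
move=> y0 h; apply: (le_trans (ler_norm x)).
by rewrite -(ger0_norm y0); rewrite -ler_sqr ?nnegrE ?normr_ge0 // !real_normK ?num_real.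
Qed.

Lemma archi_inv (e : R) : 0 < e -> exists N : nat, (N.+1%:R)^-1 < e.
Proof.
move=> e0; have ie : 0 < e^-1 by rewrite invr_gt0.
have h := archi_boundP (ltW ie).
exists (Num.bound e^-1); rewrite -[X in _ < X](invrK e) ltf_pV2 //.
- by apply: (lt_le_trans h); rewrite ler_nat.
- by rewrite posrE ltr0n.
Qed.
End RealAux.

Section SIP.
Variables (R : realType) (V : lmodType R[i]) (b : V -> V -> R[i]).
Hypothesis bl : forall (a : R[i]) x y z, b (a *: x + y) z = a * b x z + b y z.
Hypothesis bh : forall x y, b y x = (b x y)^*.
Hypothesis bp : forall x, 0 <= b x x.
Local Notation Re := complex.Re.
Local Notation Im := complex.Im.
Local Notation Q x := (Re (b x x)).
Local Notation hn := (hnorm b).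

Lemma b0l z : b 0 z = 0.
Proof.
have := bl 1 0 0 z; rewrite scaler0 addr0 mul1r => h.
by apply/(addrI (b 0 z)); rewrite addr0 -h.
Qed.
Lemma bDl x y z : b (x + y) z = b x z + b y z.
Proof. by have := bl 1 x y z; rewrite scale1r mul1r. Qed.
Lemma bZl a x z : b (a *: x) z = a * b x z.
Proof. by rewrite -[a *: x]addr0 bl b0l addr0. Qed.
Lemma bNl x z : b (- x) z = - b x z.
Proof. by rewrite -scaleN1r bZl mulN1r. Qed.
Lemma bBl x y z : b (x - y) z = b x z - b y z.
Proof. by rewrite bDl bNl. Qed.
Lemma b0r z : b z 0 = 0.
Proof. by rewrite bh b0l J0. Qed.
Lemma bDr x y z : b z (x + y) = b z x + b z y.
Proof. by rewrite bh bDl JD -!bh. Qed.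
Lemma bZr a x z : b z (a *: x) = a^* * b z x.
Proof. by rewrite bh bZl JM -bh. Qed.
Lemma bNr x z : b z (- x) = - b z x.
Proof. by rewrite bh bNl JN -bh. Qed.
Lemma bBr x y z : b z (x - y) = b z x - b z y.
Proof. by rewrite bDr bNr. Qed.
Lemma bxx x : b x x = (Q x)%:C.
Proof. exact: ge0_real. Qed.
Lemma Q_ge0 x : 0 <= Q x.
Proof. by have := bp x; rewrite le0c => /andP[]. Qed.
Lemma Re_bC x y : Re (b y x) = Re (b x y).
Proof. by rewrite bh cReJ. Qed.
Lemma QD x y : Q (x + y) = Q x + 2 * Re (b x y) + Q y.
Proof. rewrite bDl !bDr !cReD Re_bC; ring. Qed.
Lemma QB x y : Q (x - y) = Q x - 2 * Re (b x y) + Q y.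
Proof. rewrite bBl !bBr !cReB Re_bC; ring. Qed.
Lemma QZ a x : Q (a *: x) = cabs a ^+ 2 * Q x.
Proof. by rewrite bZl bZr mulrA mulJ bxx -rmorphM. Qed.
Lemma QN x : Q (- x) = Q x.
Proof. by rewrite bNl bNr opprK. Qed.
Lemma hn_ge0 x : 0 <= hn x. Proof. exact: sqrtr_ge0. Qed.
Lemma hnE x : hn x ^+ 2 = Q x.
Proof. by rewrite sqr_sqrtr // Q_ge0. Qed.
Lemma hnZ a x : hn (a *: x) = cabs a * hn x.
Proof. by rewrite /hnorm QZ sqrtrM ?sqr_ge0 // sqrtr_sqr ger0_norm // cabs_ge0. Qed.
Lemma hnN x : hn (- x) = hn x.
Proof. by rewrite /hnorm QN. Qed.
Lemma hnB x y : hn (x - y) = hn (y - x).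
Proof. by rewrite -hnN opprB. Qed.
Lemma hn0 : hn 0 = 0.
Proof. by rewrite /hnorm b0l /= sqrtr0. Qed.

Lemma CS_Re x y : Re (b x y) <= hn x * hn y.
Proof.
have h : forall t : R, 0 <= t ^+ 2 * Q x + 2 * t * Re (b x y) + Q y.
  move=> t; have := Q_ge0 (t%:C *: x + y).
  rewrite QD QZ bZl cReRM cabsR real_normK ?num_real //. 
  by rewrite mulrA.
have := disc_le (Q_ge0 x) h; rewrite -!hnE -exprMn => hh.
apply: sqrt_le_of_sqr => //; first by rewrite mulr_ge0 // hn_ge0.
Qed.

Lemma CS x y : cabs (b x y) <= hn x * hn y.
Proof.
set z := b x y.
have [z0|zn0] := eqVneq (cabs z) 0; first by rewrite z0 mulr_ge0 ?hn_ge0.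
have zp : 0 < cabs z by rewrite lt_def zn0 cabs_ge0.
have := CS_Re (z^* *: x) y; rewrite bZl -/z hnZ cabsJ mulrC mulJ /= -mulrA.
by rewrite expr2 ler_pM2l.
Qed.

Lemma hn_tri x y : hn (x + y) <= hn x + hn y.
Proof.
apply: sqrt_le_of_sqr; first by rewrite addr_ge0 ?hn_ge0.
rewrite hnE QD sqrrD -!hnE; have := CS_Re x y.
have : 0 <= hn x by apply: hn_ge0. have : 0 <= hn y by apply: hn_ge0.
lra.
Qed.

Lemma hn_tri_sub x y : hn x - hn y <= hn (x - y).
Proof.
have := hn_tri (x - y) y; rewrite subrK; lra.
Qed.
End SIP.

Section Riesz.
Variables (R : realType) (V : lmodType R[i]) (b : V -> V -> R[i]).
Hypothesis bl : forall (a : R[i]) x y z, b (a *: x + y) z = a * b x z + b y z.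
Hypothesis bh : forall x y, b y x = (b x y)^*.
Hypothesis bp : forall x, 0 <= b x x.
Hypothesis bc : forall u : nat -> V,
  (forall e : R, 0 < e -> exists N, forall k l, (N <= k)%N -> (N <= l)%N ->
      hnorm b (u k - u l) < e) ->
  exists h : V, forall e : R, 0 < e -> exists N, forall k, (N <= k)%N ->
      hnorm b (u k - h) < e.
Variable phi : V -> R[i].
Hypothesis phil : forall (a : R[i]) x y, phi (a *: x + y) = a^* * phi x + phi y.
Variable M : R.
Hypothesis phib : forall x, cabs (phi x) <= M * hnorm b x.
Local Notation Re := complex.Re.
Local Notation Im := complex.Im.
Local Notation Q x := (Re (b x x)).
Local Notation hn := (hnorm b).

Lemma phi0 : phi 0 = 0.
Proof.
have := phil 1 0 0; rewrite scaler0 addr0 JR mul1r => h.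
by apply/(addrI (phi 0)); rewrite addr0 -h.
Qed.
Lemma phiD x y : phi (x + y) = phi x + phi y.
Proof. by have := phil 1 x y; rewrite scale1r JR mul1r. Qed.
Lemma phiZ a x : phi (a *: x) = a^* * phi x.
Proof. by rewrite -[a *: x]addr0 phil phi0 addr0. Qed.

Let J x := Q x - 2 * Re (phi x).

Lemma Rephi_le x : `|Re (phi x)| <= M * hn x.
Proof. exact: le_trans (Re_le_cabs _) (phib x). Qed.

Lemma J_lb x : - M ^+ 2 <= J x.
Proof.
rewrite /J -(hnE bl bh bp); have := Rephi_le x.
have := ler_norm (Re (phi x)); have := sqr_ge0 (hn x - M); nra.
Qed.

Let S := [set J x | x in setT].
Let j := inf S.

Lemma S_inf : has_inf S.
Proof.
split; first by exists (J 0), 0.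
by exists (- M ^+ 2) => _ [x _ <-]; exact: J_lb.
Qed.

Lemma j_le x : j <= J x.
Proof. by apply: (ge_inf (proj2 S_inf)); exists x. Qed.

Lemma para x y : Q (x - y) <= 2 * J x + 2 * J y - 4 * j.
Proof.
set m := (2^-1 : R)%:C *: (x + y).
have hm := j_le m.
have Qm : Q m = 2^-1 ^+ 2 * Q (x + y).
  by rewrite /m (QZ bl bh bp) cabsR ger0_norm // invr_ge0 ler0n.
have Pm : Re (phi m) = 2^-1 * (Re (phi x) + Re (phi y)).
  by rewrite /m phiZ JR cReRM phiD cReD.
move: hm; rewrite /J Qm Pm (QD bl bh bp) (QB bl bh bp).
lra.
Qed.

Lemma minseq : exists u : nat -> V, forall n, J (u n) < j + (n.+1%:R)^-1.
Proof.
have h : forall n : nat, exists x, J x < j + (n.+1%:R)^-1.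
  move=> n; have np : 0 < (n.+1%:R)^-1 :> R by rewrite invr_gt0 ltr0n.
  by have [_ [x _ <-] hx] := inf_adherent np S_inf; exists x.
by have [u hu] := choice h; exists u.
Qed.

Lemma inv_mono (k N : nat) : (N <= k)%N -> (k.+1%:R)^-1 <= (N.+1%:R)^-1 :> R.
Proof.
move=> hk; rewrite lef_pV2 ?posrE ?ltr0n // ler_nat; by [].
Qed.

Lemma riesz_exists : exists y, forall x, b y x = phi x.
Proof.
have [u hu] := minseq.
have cau : forall e : R, 0 < e -> exists N, forall k l, (N <= k)%N -> (N <= l)%N ->
    hn (u k - u l) < e.
  move=> e e0; have e4 : 0 < e ^+ 2 / 4 by rewrite divr_gt0 // exprn_gt0.
  have [N hN] := archi_inv e4; exists N => k l hk hl.
  have h1 := hu k; have h2 := hu l; have h3 := para (u k) (u l).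
  have i1 := inv_mono hk; have i2 := inv_mono hl.
  have e44 : 4 * (e ^+ 2 / 4) = e ^+ 2 by field.
  have hq : Q (u k - u l) < e ^+ 2.
    move: h1 h2 h3 i1 i2 hN e44; clearbody J S j.
    move: (J (u k)) (J (u l)) (Q (u k - u l)) (k.+1%:R^-1) (l.+1%:R^-1) (N.+1%:R^-1) (e ^+ 2 / 4) (e ^+ 2) j => *; lra.
  rewrite -(ltr_pXn2r (n:=2)) ?nnegrE ?(hn_ge0 bl bh bp) ?(ltW e0) // (hnE bl bh bp) //.
have [y0 hy0] := bc cau.
have Jy0 : J y0 <= j.
  rewrite leNgt; apply/negP => hlt.
  set eps := J y0 - j.
  have eps0 : 0 < eps by rewrite subr_gt0.
  set K := 2 * hn y0 + 3 + 2 * `|M|.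
  have K0 : 0 < K.
    by rewrite /K; have := hn_ge0 bl bh bp y0; have := normr_ge0 M; lra.
  have [N1 hN1] := hy0 1 ltr01.
  have [N2 hN2] := hy0 (eps / (2 * K)) (divr_gt0 eps0 (mulr_gt0 (ltr0n _ 2 : 0 < 2%:R :> R) K0)).
  have [N3 hN3] := archi_inv (divr_gt0 eps0 (ltr0n _ 2 : 0 < 2%:R :> R)).
  set k := maxn N1 (maxn N2 N3).
  have k1 : (N1 <= k)%N by rewrite leq_maxl.
  have k2 : (N2 <= k)%N by rewrite /k leq_max leq_maxl orbT.
  have k3 : (N3 <= k)%N by rewrite /k leq_max leq_maxr orbT.
  have d1 := hN1 _ k1; have d2 := hN2 _ k2; have i3 := inv_mono k3.
  have Juk := hu k.
  set d := hn (u k - y0).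
  have d0 : 0 <= d := hn_ge0 bl bh bp _.
  have ey0 : y0 = u k + (y0 - u k) by rewrite addrC subrK.
  have Qy0 : Q y0 = Q (u k) + 2 * Re (b (u k) (y0 - u k)) + Q (y0 - u k).
    by rewrite {1 2}ey0 (QD bl bh bp).
  have cs := CS_Re bl bh bp (u k) (y0 - u k).
  have huk : hn (u k) <= hn y0 + d.
    by have := hn_tri bl bh bp y0 (u k - y0); rewrite addrC subrK.
  have hd : hn (y0 - u k) = d by rewrite (hnB bl bh bp).
  have Qd : Q (y0 - u k) = d ^+ 2 by rewrite -hd (hnE bl bh bp).
  have Py0 : Re (phi y0) = Re (phi (u k)) + Re (phi (y0 - u k)).
    by rewrite {1}ey0 phiD cReD.
  have hp := Rephi_le (y0 - u k); rewrite hd in hp.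
  have hp' := ler_norm (- Re (phi (y0 - u k))); rewrite normrN in hp'.
  have hM := ler_norm M.
  have hy := hn_ge0 bl bh bp y0.
  have key : J y0 <= J (u k) + d * K.
    have eK : d * K = 2 * (hn y0 * d) + 3 * d + 2 * (`|M| * d) by rewrite /K; ring.
    rewrite eK /J Qy0 Qd Py0; rewrite hd in cs.
    have h5 : hn (u k) * d <= hn y0 * d + d ^+ 2.
      by rewrite expr2 -mulrDl ler_wpM2r.
    have dd : d ^+ 2 <= d.
      by rewrite expr2 -{3}(mul1r d) ler_wpM2r // ltW.
    have dM : M * d <= `|M| * d by rewrite ler_wpM2r.
    move: dd dM h5 cs hp hp'.
    move: (d ^+ 2) (M * d) (`|M| * d) (hn (u k) * d) (hn y0 * d) (Re (b (u k) (y0 - u k))) (Re (phi (y0 - u k))) (Re (phi (u k))) (Q (u k)) (`|Re (phi (y0 - u k))|) => *.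
    lra.
  have : d * K < eps / 2.
    by rewrite -ltr_pdivlMr // -mulrA -invfM.
  rewrite /eps => h6; move: Juk key i3 hN3 h6; rewrite /eps.
  move: (J y0) (J (u k)) (d * K) (k.+1%:R^-1) (N3.+1%:R^-1) j => *; lra.
have re : forall x, Re (b y0 x) = Re (phi x).
  move=> x; apply/eqP; rewrite -subr_eq0; apply/eqP.
  apply: (@lin_zero _ (Q x)); first exact: Q_ge0 bl bh bp x.
  move=> t; have := j_le (t%:C *: x + y0).
  rewrite /J (QD bl bh bp) (QZ bl bh bp) cabsR (bZl bl bh bp) cReRM phil JR cReD cReRM.
  rewrite (Re_bC bl bh bp) real_normK ?num_real //.
  move: Jy0; rewrite /J; lra.
exists y0 => x; apply: cx_eq; first exact: re.
have := re ('i *: x); rewrite (bZr bl bh bp) phiZ Ji !Re_neg_iM //.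
Qed.
End Riesz.

Section CMeas.
Context {R : realType} {d : measure_display} {X : measurableType d}.
Local Notation Re := complex.Re.
Local Notation Im := complex.Im.
Implicit Types f g : X -> R[i].

Lemma cmeasD f g : cmeasurable f -> cmeasurable g -> cmeasurable (fun x => f x + g x).
Proof.
move=> [f1 f2] [g1 g2]; split.
  by rewrite (_ : (fun x => _) = (fun x => Re (f x) + Re (g x))); [exact: measurable_funD|apply: funext => x; rewrite cReD].
by rewrite (_ : (fun x => _) = (fun x => Im (f x) + Im (g x))); [exact: measurable_funD|apply: funext => x; rewrite cImD].
Qed.

Lemma cmeasM f g : cmeasurable f -> cmeasurable g -> cmeasurable (fun x => f x * g x).
Proof.
move=> [f1 f2] [g1 g2]; split.
  rewrite (_ : (fun x => _) = (fun x => Re (f x) * Re (g x) - Im (f x) * Im (g x))).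
    by apply: measurable_funB; exact: measurable_funM.
  by apply: funext => x; rewrite cReM.
rewrite (_ : (fun x => _) = (fun x => Re (f x) * Im (g x) + Im (f x) * Re (g x))).
  by apply: measurable_funD; exact: measurable_funM.
by apply: funext => x; rewrite cImM.
Qed.

Lemma cmeasJ f : cmeasurable f -> cmeasurable (fun x => (f x)^*).
Proof.
move=> [f1 f2]; split.
  by rewrite (_ : (fun x => _) = (fun x => Re (f x))) //; apply: funext => x; rewrite cReJ.
rewrite (_ : (fun x => _) = (fun x => - Im (f x))); last by apply: funext => x; rewrite cImJ.
exact: measurableT_comp.
Qed.

Lemma cmeas_cst (a : R[i]) : cmeasurable (fun _ : X => a).
Proof. by split; exact: measurable_cst. Qed.

Lemma cmeasR (r : X -> R) : measurable_fun setT r -> cmeasurable (fun x => (r x)%:C).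
Proof. by move=> mr; split => //=; exact: measurable_cst. Qed.

Lemma cmeasN f : cmeasurable f -> cmeasurable (fun x => - f x).
Proof.
move=> mf; rewrite (_ : (fun x => _) = (fun x => (-1) * f x)).
  by apply: cmeasM => //; exact: cmeas_cst.
by apply: funext => x; rewrite mulN1r.
Qed.

Lemma cmeasB f g : cmeasurable f -> cmeasurable g -> cmeasurable (fun x => f x - g x).
Proof. by move=> mf mg; apply: cmeasD => //; exact: cmeasN. Qed.

Lemma meas_cabs f : cmeasurable f -> measurable_fun setT (fun x => cabs (f x)).
Proof.
move=> [f1 f2]; rewrite /cabs.
rewrite (_ : (fun x => _) = Num.sqrt \o (fun x => Re (f x) ^+ 2 + Im (f x) ^+ 2)) //.
apply: measurableT_comp.
  exact: continuous_measurable_fun (@sqrt_continuous R).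
by apply: measurable_funD; exact: measurable_funX.
Qed.

Lemma meas_cabs2 f : cmeasurable f -> measurable_fun setT (fun x => cabs (f x) ^+ 2).
Proof. by move=> mf; apply: measurable_funX; exact: meas_cabs. Qed.
End CMeas.

Section CInt2.
Context {R : realType} {d : measure_display} {X : measurableType d}.
Variable mu : {measure set X -> \bar R}.
Local Notation Re := complex.Re.
Local Notation Im := complex.Im.
Implicit Types f g : X -> R[i].

Definition rint (f : X -> R) := mu.-integrable setT (fun x => (f x)%:E).

Lemma eqint (F G : X -> \bar R) : (forall x, F x = G x) ->
  mu.-integrable setT F -> mu.-integrable setT G.
Proof. by move=> h; rewrite (_ : G = F) //; apply: funext => x; rewrite h. Qed.
Definition L2 f := cmeasurable f /\ (sqint mu f < +oo)%E.

Lemma rint_meas (f : X -> R) : rint f -> measurable_fun setT f.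
Proof. by move=> /integrableP[/measurable_EFinP]. Qed.

Lemma rint_le (f g : X -> R) : measurable_fun setT f -> rint g ->
  (forall x, `|f x| <= `|g x|) -> rint f.
Proof.
move=> mf ig h; apply: le_integrable ig => //.
  exact/measurable_EFinP.
by move=> x _; rewrite /= lee_fin.
Qed.

Lemma rintD (f g : X -> R) : rint f -> rint g -> rint (fun x => f x + g x).
Proof.
move=> hf hg; have := integrableD measurableT hf hg.
by apply: eqint => x; rewrite /= EFinD.
Qed.

Lemma rintZ (k : R) (f : X -> R) : rint f -> rint (fun x => k * f x).
Proof.
move=> hf; have := integrableZl measurableT k hf.
by apply: eqint => x; rewrite /= EFinM.
Qed.

Lemma rintN (f : X -> R) : rint f -> rint (fun x => - f x).
Proof.
move=> hf; have := rintZ (-1) hf.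
by apply: eqint => x; rewrite mulN1r.
Qed.

Lemma rintB (f g : X -> R) : rint f -> rint g -> rint (fun x => f x - g x).
Proof. by move=> hf hg; apply: rintD => //; exact: rintN. Qed.

Lemma rint_norm (f : X -> R) : rint f -> rint (fun x => `|f x|).
Proof. by move=> hf; exact: integrable_norm. Qed.

Lemma rint_ae (f g : X -> R) : rint f -> measurable_fun setT g ->
  {ae mu, forall x, f x = g x} -> rint g.
Proof.
move=> /integrableP[mf fi] mg hae; apply/integrableP; split.
  exact/measurable_EFinP.
rewrite (@ge0_ae_eq_integral _ _ _ mu setT (fun x => `|(g x)%:E|)%E (fun x => `|(f x)%:E|)%E) //.
- by apply: measurableT_comp => //; exact/measurable_EFinP.
- by apply: measurableT_comp.
- by apply: filterS hae => x -> _.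
Qed.

Lemma Rint_ae (f g : X -> R) : rint f -> measurable_fun setT g ->
  {ae mu, forall x, f x = g x} -> \int[mu]_x f x = \int[mu]_x g x.
Proof.
move=> hf mg hae; rewrite /Rintegral (ae_eq_integral (mu:=mu) (D:=setT) (fun x => (g x)%:E) (fun x => (f x)%:E)) //.
- by apply/measurable_EFinP; exact: rint_meas.
- exact/measurable_EFinP.
- by apply: filterS hae => x -> _.
Qed.

Lemma cint_meas f : cintegrable mu f -> cmeasurable f.
Proof. by move=> [h1 h2]; split; exact: rint_meas. Qed.

Lemma cintD f g : cintegrable mu f -> cintegrable mu g ->
  cintegrable mu (fun x => f x + g x).
Proof.
move=> [f1 f2] [g1 g2]; split.
  by have := rintD f1 g1; apply: eqint => x; rewrite cReD.
by have := rintD f2 g2; apply: eqint => x; rewrite cImD.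
Qed.

Lemma cintZ (a : R[i]) f : cintegrable mu f -> cintegrable mu (fun x => a * f x).
Proof.
move=> [f1 f2]; split.
  have := rintB (rintZ (Re a) f1) (rintZ (Im a) f2).
  by apply: eqint => x; rewrite cReM.
have := rintD (rintZ (Re a) f2) (rintZ (Im a) f1).
by apply: eqint => x; rewrite cImM.
Qed.

Lemma cintJ f : cintegrable mu f -> cintegrable mu (fun x => (f x)^*).
Proof.
move=> [f1 f2]; split.
  by move: f1; apply: eqint => x; rewrite cReJ.
by have := rintN f2; apply: eqint => x; rewrite cImJ.
Qed.

Lemma cint_eq f g : (forall x, f x = g x) -> cintegrable mu f -> cintegrable mu g.
Proof. by move=> h; rewrite (_ : g = f) //; apply: funext => x; rewrite h. Qed.

Lemma cintN f : cintegrable mu f -> cintegrable mu (fun x => - f x).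
Proof. by move=> hf; apply: (cint_eq _ (cintZ (-1) hf)) => x; rewrite mulN1r. Qed.

Lemma cintB f g : cintegrable mu f -> cintegrable mu g ->
  cintegrable mu (fun x => f x - g x).
Proof. by move=> hf hg; apply: cintD => //; exact: cintN. Qed.

Lemma cint_ae f g : cintegrable mu f -> cmeasurable g ->
  {ae mu, forall x, f x = g x} -> cintegrable mu g.
Proof.
move=> [f1 f2] [g1 g2] hae; split.
  by apply: (rint_ae f1 g1); apply: filterS hae => x ->.
by apply: (rint_ae f2 g2); apply: filterS hae => x ->.
Qed.

Lemma cint_abs f : cintegrable mu f -> rint (fun x => cabs (f x)).
Proof.
move=> hf; have [m1 m2] := cint_meas hf; have [f1 f2] := hf.
apply: (rint_le (g := fun x => `|Re (f x)| + `|Im (f x)|)).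
- exact: meas_cabs (cint_meas hf).
- by apply: rintD; exact: rint_norm.
- move=> x; rewrite ger0_norm ?cabs_ge0 // ger0_norm ?addr_ge0 //.
  exact: cabs_le_ReIm.
Qed.

Lemma L2_rint2 f : L2 f -> rint (fun x => cabs (f x) ^+ 2).
Proof.
move=> [mf fi]; apply/integrableP; split.
  by apply/measurable_EFinP; exact: meas_cabs2.
rewrite (_ : (fun x => _) = (fun x => (cabs (f x) ^+ 2)%:E)) //.
by apply: funext => x; rewrite /= ger0_norm // sqr_ge0.
Qed.

Lemma rint2_L2 f : cmeasurable f -> rint (fun x => cabs (f x) ^+ 2) -> L2 f.
Proof.
move=> mf /integrableP[_ fi]; split => //.
move: fi; rewrite /sqint (_ : (fun x => _) = (fun x => (cabs (f x) ^+ 2)%:E)) //.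
by apply: funext => x; rewrite /= ger0_norm // sqr_ge0.
Qed.

Lemma sqintE f : L2 f -> sqint mu f = (\int[mu]_x (cabs (f x) ^+ 2))%:E.
Proof.
move=> hf; have := L2_rint2 hf => /integrable_fin_num h.
by rewrite /Rintegral fineK // h.
Qed.

Lemma sq_ge0_int f : 0 <= \int[mu]_x (cabs (f x) ^+ 2).
Proof. by apply: Rintegral_ge0 => x _; exact: sqr_ge0. Qed.

Lemma amgm (a b : R) : 0 <= a -> 0 <= b -> a * b <= a ^+ 2 + b ^+ 2.
Proof. move=> a0 b0; have := sqr_ge0 (a - b); nra. Qed.

Lemma L2_prod f g : L2 f -> L2 g -> cintegrable mu (fun x => f x * g x).
Proof.
move=> hf hg; have mfg := cmeasM hf.1 hg.1; have [m1 m2] := mfg.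
have ib := rintD (L2_rint2 hf) (L2_rint2 hg).
have bnd : forall x, cabs (f x * g x) <= `|cabs (f x) ^+ 2 + cabs (g x) ^+ 2|.
  move=> x; rewrite cabsM ger0_norm ?addr_ge0 ?sqr_ge0 //.
  by apply: amgm; exact: cabs_ge0.
split.
  apply: (rint_le m1 ib) => x; apply: le_trans (bnd x).
  exact: Re_le_cabs.
apply: (rint_le m2 ib) => x; apply: le_trans (bnd x).
exact: Im_le_cabs.
Qed.

Lemma L2D f g : L2 f -> L2 g -> L2 (fun x => f x + g x).
Proof.
move=> hf hg; have mfg := cmeasD hf.1 hg.1.
apply: rint2_L2 => //.
have ib := rintZ 2 (rintD (L2_rint2 hf) (L2_rint2 hg)).
apply: (rint_le (meas_cabs2 mfg) ib) => x.
rewrite !ger0_norm ?sqr_ge0 ?mulr_ge0 ?addr_ge0 ?sqr_ge0 //.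
have h := cabsD (f x) (g x); have h0 := cabs_ge0 (f x + g x).
have := cabs_ge0 (f x); have := cabs_ge0 (g x).
move: h h0; move: (cabs (f x + g x)) (cabs (f x)) (cabs (g x)) => a b c h h0 c0 b0.
have h1 : a * a <= (b + c) * (b + c) by apply: ler_pM.
have := sqr_ge0 (b - c); rewrite !expr2 in h1 *; lra.
Qed.

Lemma L2Z (a : R[i]) f : L2 f -> L2 (fun x => a * f x).
Proof.
move=> hf; have m := cmeasM (cmeas_cst a) hf.1.
apply: rint2_L2 => //.
have := rintZ (cabs a ^+ 2) (L2_rint2 hf).
by apply: eqint => x; rewrite cabsM exprMn.
Qed.

Lemma L2J f : L2 f -> L2 (fun x => (f x)^*).
Proof.
move=> hf; apply: rint2_L2; first exact: cmeasJ hf.1.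
by have := L2_rint2 hf; apply: eqint => x; rewrite cabsJ.
Qed.

Lemma L2_ae f g : L2 f -> cmeasurable g -> {ae mu, forall x, f x = g x} -> L2 g.
Proof.
move=> hf mg hae; apply: rint2_L2 => //.
apply: (rint_ae (L2_rint2 hf)); first exact: meas_cabs2.
by apply: filterS hae => x ->.
Qed.

Lemma L2B f g : L2 f -> L2 g -> L2 (fun x => f x - g x).
Proof.
move=> hf hg; have := L2D hf (L2Z (-1) hg).
by rewrite (_ : (fun x => f x + -1 * g x) = (fun x => f x - g x)) //; apply: funext => x; rewrite mulN1r.
Qed.

Lemma cintegralD f g : cintegrable mu f -> cintegrable mu g ->
  cintegral mu (fun x => f x + g x) = cintegral mu f + cintegral mu g.
Proof.
move=> [f1 f2] [g1 g2]; apply: cx_eq => /=.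
  by under eq_Rintegral do rewrite cReD; rewrite RintegralD.
by under eq_Rintegral do rewrite cImD; rewrite RintegralD.
Qed.

Lemma cintegralZ (a : R[i]) f : cintegrable mu f ->
  cintegral mu (fun x => a * f x) = a * cintegral mu f.
Proof.
move=> [f1 f2]; apply: cx_eq; rewrite ?cReM ?cImM /=.
  under eq_Rintegral do rewrite cReM.
  by rewrite RintegralB ?RintegralZl //; [exact: rintZ|exact: rintZ].
under eq_Rintegral do rewrite cImM.
by rewrite RintegralD ?RintegralZl //; [exact: rintZ|exact: rintZ].
Qed.

Lemma cintegralJ f : cintegrable mu f ->
  cintegral mu (fun x => (f x)^*) = (cintegral mu f)^*.
Proof.
move=> [f1 f2]; apply: cx_eq; rewrite ?cReJ ?cImJ /=.
  by under eq_Rintegral do rewrite cReJ.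
under eq_Rintegral do rewrite cImJ.
by rewrite -[X in _ = X]mulN1r -RintegralZl //; apply: eq_Rintegral => x _; rewrite mulN1r.
Qed.

Lemma cintegralN f : cintegrable mu f ->
  cintegral mu (fun x => - f x) = - cintegral mu f.
Proof.
move=> hf; rewrite -mulN1r -cintegralZ //.
by congr cintegral; apply: funext => x; rewrite mulN1r.
Qed.

Lemma cintegralB f g : cintegrable mu f -> cintegrable mu g ->
  cintegral mu (fun x => f x - g x) = cintegral mu f - cintegral mu g.
Proof.
by move=> hf hg; rewrite cintegralD ?cintegralN //; exact: cintN.
Qed.

Lemma cintegral_ae f g : cintegrable mu f -> cmeasurable g ->
  {ae mu, forall x, f x = g x} -> cintegral mu f = cintegral mu g.
Proof.
move=> [f1 f2] [g1 g2] hae; rewrite /cintegral.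
rewrite (Rint_ae f1 g1); last by apply: filterS hae => x ->.
by rewrite (Rint_ae f2 g2) //; apply: filterS hae => x ->.
Qed.

Lemma cintegral_real (r : X -> R) :
  cintegral mu (fun x => (r x)%:C) = (\int[mu]_x r x)%:C.
Proof.
rewrite /cintegral /=; congr Complex.
by rewrite Rintegral_cst // mul0r.
Qed.

Lemma cabs_cintegral f : cintegrable mu f ->
  cabs (cintegral mu f) <= \int[mu]_x cabs (f x).
Proof.
move=> hf; set z := cintegral mu f.
have [z0|zn0] := eqVneq (cabs z) 0.
  by rewrite z0; apply: Rintegral_ge0 => x _; exact: cabs_ge0.
have zp : 0 < cabs z by rewrite lt_def zn0 cabs_ge0.
have e1 : cabs z ^+ 2 = Re (cintegral mu (fun x => z^* * f x)).
  by rewrite cintegralZ // -/z mulrC mulJ.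
have hzf := cintZ z^* hf.
have e2 : Re (cintegral mu (fun x => z^* * f x)) <= \int[mu]_x cabs (z^* * f x).
  rewrite /=; apply: le_Rintegral => //.
  - exact: hzf.1.
  - exact: cint_abs.
  - move=> x _; apply: le_trans (Re_le_cabs _); exact: ler_norm.
have e3 : \int[mu]_x cabs (z^* * f x) = cabs z * \int[mu]_x cabs (f x).
  under eq_Rintegral do rewrite cabsM cabsJ.
  by rewrite RintegralZl //; exact: cint_abs.
have := e2; rewrite -e1 e3 expr2 ler_pM2l //.
Qed.
End CInt2.

Section CS2.
Context {R : realType} {d : measure_display} {X : measurableType d}.
Variable mu : {measure set X -> \bar R}.
Local Notation Re := complex.Re.
Local Notation Im := complex.Im.
Implicit Types f g : X -> R[i].

Lemma rint_abs_prod f g : L2 mu f -> L2 mu g ->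
  rint mu (fun x => cabs (f x) * cabs (g x)).
Proof.
move=> hf hg; have := cint_abs (L2_prod hf hg).
by apply: eqint => x; rewrite cabsM.
Qed.

Lemma L2_CS f g : L2 mu f -> L2 mu g ->
  \int[mu]_x (cabs (f x) * cabs (g x)) <=
  Num.sqrt (\int[mu]_x (cabs (f x) ^+ 2)) * Num.sqrt (\int[mu]_x (cabs (g x) ^+ 2)).
Proof.
move=> hf hg.
set F := \int[mu]_x (cabs (f x) ^+ 2).
set G := \int[mu]_x (cabs (g x) ^+ 2).
set P := \int[mu]_x (cabs (f x) * cabs (g x)).
have iF := L2_rint2 hf; have iG := L2_rint2 hg; have iP := rint_abs_prod hf hg.
have F0 : 0 <= F by exact: sq_ge0_int.
have G0 : 0 <= G by exact: sq_ge0_int.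
have P0 : 0 <= P by apply: Rintegral_ge0 => x _; rewrite mulr_ge0 // cabs_ge0.
have h : forall t : R, 0 <= t ^+ 2 * F + 2 * t * P + G.
  move=> t.
  have e : \int[mu]_x ((t * cabs (f x) + cabs (g x)) ^+ 2) = t ^+ 2 * F + 2 * t * P + G.
    rewrite (@eq_Rintegral _ _ _ mu setT (fun x => (t ^+ 2 * cabs (f x) ^+ 2 + 2 * t * (cabs (f x) * cabs (g x))) + cabs (g x) ^+ 2)); last first.
      by move=> x _; ring.
    have i1 := rintZ (t ^+ 2) iF; have i2 := rintZ (2 * t) iP.
    rewrite RintegralD //; last exact: rintD.
    rewrite RintegralD //.
    by rewrite !RintegralZl.
  by rewrite -e; apply: Rintegral_ge0 => x _; exact: sqr_ge0.
have := disc_le F0 h => hP.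
apply: sqrt_le_of_sqr; first by rewrite mulr_ge0 // sqrtr_ge0.
by rewrite exprMn !sqr_sqrtr.
Qed.
End CS2.

Section CInt3.
Context {R : realType} {d : measure_display} {X : measurableType d}.
Variable mu : {measure set X -> \bar R}.

Lemma Rint_EFin (f : X -> R) : rint mu f ->
  (\int[mu]_x (f x)%:E)%E = (\int[mu]_x f x)%:E.
Proof. by move=> hf; rewrite /Rintegral fineK //; exact: integrable_fin_num. Qed.

Lemma Rint_le_ae (f g : X -> R) : rint mu f -> rint mu g ->
  {ae mu, forall x, f x <= g x} -> \int[mu]_x f x <= \int[mu]_x g x.
Proof.
move=> hf hg hae; rewrite -subr_ge0 -RintegralB //.
have ib := rintB hg hf.
have ip := integrable_funrpos measurableT ib.
rewrite (Rint_ae ib (g := (fun x => g x - f x)^\+)) //.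
- by apply: Rintegral_ge0 => x _; rewrite funrpos_ge0.
- exact: (rint_meas ip).
- apply: filterS hae => x h; rewrite /funrpos /= (_ : Num.max (g x - f x) 0 = g x - f x) //.
  by apply/max_idPl; rewrite subr_ge0.
Qed.
End CInt3.

Lemma le_of_eps (R : realType) (x y c : R) : 0 <= c ->
  (forall e, 0 < e -> x <= y + c * e) -> x <= y.
Proof.
move=> c0 h; rewrite leNgt; apply/negP => yx.
have c1 : 0 < c + 1 by rewrite ltr_wpDl.
have e0 : 0 < (x - y) / (c + 1) by rewrite divr_gt0 // subr_gt0.
have := h _ e0.
have e1 : c * ((x - y) / (c + 1)) = (x - y) - (x - y) / (c + 1).
  by field; rewrite gt_eqF.
move: e0 e1; move: ((x - y) / (c + 1)) (c * ((x - y) / (c + 1))) => *; lra.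
Qed.

Section Anal.
Context {R : realType} {D H : lmodType R[i]} {d : measure_display} {X : measurableType d}.
Variables (ip : H -> H -> R[i]) (iota : D -> H) (mu : {measure set X -> \bar R}).
Hypothesis ipl : forall (a : R[i]) x y z, ip (a *: x + y) z = a * ip x z + ip y z.
Hypothesis ipc : forall x y, ip y x = (ip x y)^*.
Hypothesis ipp : forall x, 0 <= ip x x.
Hypothesis ipcomp : forall u : nat -> H,
    (forall e : R, 0 < e -> exists N, forall k l, (N <= k)%N -> (N <= l)%N ->
        hnorm ip (u k - u l) < e) ->
    exists h : H, forall e : R, 0 < e -> exists N, forall k, (N <= k)%N ->
        hnorm ip (u k - h) < e.
Variable omega : X -> D -> R[i].
Variable T : H -> X -> R[i].
Variables (A K : R).
Hypothesis A0 : 0 < A.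
Hypothesis om_meas : forall f, cmeasurable (fun x => omega x f).
Hypothesis om_low : forall f, ((A * hnorm ip (iota f) ^+ 2)%:E <= sqint mu (fun x => omega x f))%E.
Hypothesis T_iota : forall f, {ae mu, forall x, T (iota f) x = (omega x f)^*}.
Hypothesis T_meas : forall h, cmeasurable (T h).
Hypothesis T_bnd : forall h, (sqint mu (T h) <= (K * hnorm ip h ^+ 2)%:E)%E.
Hypothesis T_lin : forall (a : R[i]) h1 h2,
  {ae mu, forall x, T (a *: h1 + h2) x = a * T h1 x + T h2 x}.
Hypothesis dense : forall h (e : R), 0 < e -> exists f, hnorm ip (h - iota f) < e.
Local Notation Re := complex.Re.
Local Notation Im := complex.Im.
Local Notation hn := (hnorm ip).

Lemma TL2 h : L2 mu (T h).
Proof. by split => //; apply: le_lt_trans (T_bnd h) _; exact: ltry. Qed.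

Definition nT h := \int[mu]_x (cabs (T h x) ^+ 2).

Lemma nT_ge0 h : 0 <= nT h. Proof. exact: sq_ge0_int. Qed.

Lemma nT_le h : nT h <= `|K| * hn h ^+ 2.
Proof.
have := T_bnd h; rewrite (sqintE (TL2 h)) lee_fin => h1.
apply: le_trans h1 _; apply: ler_wpM2r; [exact: sqr_ge0|exact: ler_norm].
Qed.

Lemma nT_iota f : A * hn (iota f) ^+ 2 <= nT (iota f).
Proof.
have := om_low f; rewrite -lee_fin /nT -(sqintE (TL2 _)).
suff -> : sqint mu (T (iota f)) = sqint mu (fun x => omega x f) by [].
rewrite /sqint (@ge0_ae_eq_integral _ _ _ mu setT _ (fun x => (cabs (omega x f) ^+ 2)%:E)) //.
- by apply/measurable_EFinP; exact: meas_cabs2.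
- by apply/measurable_EFinP; exact: meas_cabs2.
- by move=> x _; rewrite lee_fin sqr_ge0.
- by move=> x _; rewrite lee_fin sqr_ge0.
- by apply: filterS (T_iota f) => x -> _; rewrite cabsJ.
Qed.

Definition Bf h1 h2 := cintegral mu (fun x => T h1 x * (T h2 x)^*).

Lemma Bf_int h1 h2 : cintegrable mu (fun x => T h1 x * (T h2 x)^*).
Proof. exact: L2_prod (TL2 _) (L2J (TL2 _)). Qed.

Lemma Bf_l (a : R[i]) x y z : Bf (a *: x + y) z = a * Bf x z + Bf y z.
Proof.
rewrite /Bf (@cintegral_ae _ _ _ mu _ (fun t => a * (T x t * (T z t)^*) + T y t * (T z t)^*)).
- have i1 := cintZ a (Bf_int x z).
  by rewrite cintegralD ?cintegralZ //; exact: Bf_int.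
- exact: Bf_int.
- apply: cmeasD; first apply: cmeasM; first exact: cmeas_cst.
    exact: (cint_meas (Bf_int _ _)).
  exact: (cint_meas (Bf_int _ _)).
- by apply: filterS (T_lin a x y) => t ->; rewrite mulrDl mulrA.
Qed.

Lemma Bf_h x y : Bf y x = (Bf x y)^*.
Proof.
rewrite /Bf -cintegralJ; last exact: Bf_int.
by congr cintegral; apply: funext => t; rewrite JM JK mulrC.
Qed.

Lemma Bf_xx x : Bf x x = (nT x)%:C.
Proof.
rewrite /Bf -cintegral_real; congr cintegral; apply: funext => t.
by rewrite mulJ.
Qed.

Lemma Bf_p x : 0 <= Bf x x.
Proof. by rewrite Bf_xx ler0c nT_ge0. Qed.

Lemma hnB_E h : hnorm Bf h = Num.sqrt (nT h).
Proof. by rewrite /hnorm Bf_xx. Qed.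

Lemma hnB_le h : hnorm Bf h <= Num.sqrt `|K| * hn h.
Proof.
have e : Num.sqrt `|K| * hn h = Num.sqrt (`|K| * hn h ^+ 2).
  have h0 := hn_ge0 ipl ipc ipp h.
  by rewrite sqrtrM // sqrtr_sqr (ger0_norm h0).
by rewrite hnB_E e ler_sqrt ?nT_le // mulr_ge0 // sqr_ge0.
Qed.

Lemma hnB_iota f : Num.sqrt A * hn (iota f) <= hnorm Bf (iota f).
Proof.
have e : Num.sqrt A * hn (iota f) = Num.sqrt (A * hn (iota f) ^+ 2).
  have h0 := hn_ge0 ipl ipc ipp (iota f).
  by rewrite sqrtrM ?(ltW A0) // sqrtr_sqr (ger0_norm h0).
by rewrite hnB_E e ler_sqrt ?nT_iota // nT_ge0.
Qed.

Lemma coerc h : Num.sqrt A * hn h <= hnorm Bf h.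
Proof.
apply: (@le_of_eps _ _ _ (Num.sqrt `|K| + Num.sqrt A)).
  by rewrite addr_ge0 // sqrtr_ge0.
move=> e e0; have [f hf] := dense h e0.
have t1 := hn_tri_sub Bf_l Bf_h Bf_p (iota f) (iota f - h).
have e1 : iota f - (iota f - h) = h by rewrite opprB addrC subrK.
rewrite e1 in t1.
have t2 := hnB_le (iota f - h).
rewrite (hnB ipl ipc ipp) in t2.
have t3 := hn_tri_sub ipl ipc ipp h (h - iota f).
have e3 : h - (h - iota f) = iota f by rewrite opprB addrC subrK.
rewrite e3 in t3.
have t4 := hnB_iota f.
have sA : 0 <= Num.sqrt A by apply: sqrtr_ge0.
have sK : 0 <= Num.sqrt `|K| by apply: sqrtr_ge0.
have t5 : Num.sqrt A * hn h <= Num.sqrt A * hn (iota f) + Num.sqrt A * e.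
  rewrite -mulrDr ler_wpM2l //; have := ltW hf; lra.
have t6 : Num.sqrt `|K| * hn (h - iota f) <= Num.sqrt `|K| * e.
  by rewrite ler_wpM2l // ltW.
rewrite mulrDl; move: t1 t2 t4 t5 t6.
move: (Num.sqrt A * hn h) (Num.sqrt A * hn (iota f)) (Num.sqrt A * e) (Num.sqrt `|K| * e) (Num.sqrt `|K| * hn (h - iota f)) => *.
lra.
Qed.

Lemma Bf_complete : forall u : nat -> H,
  (forall e : R, 0 < e -> exists N, forall k l, (N <= k)%N -> (N <= l)%N ->
      hnorm Bf (u k - u l) < e) ->
  exists h : H, forall e : R, 0 < e -> exists N, forall k, (N <= k)%N ->
      hnorm Bf (u k - h) < e.
Proof.
move=> u hu.
have sA : 0 < Num.sqrt A by rewrite sqrtr_gt0.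
have cip : forall e : R, 0 < e -> exists N, forall k l, (N <= k)%N -> (N <= l)%N ->
      hn (u k - u l) < e.
  move=> e e0; have [N hN] := hu _ (mulr_gt0 sA e0); exists N => k l hk hl.
  have := coerc (u k - u l); have := hN _ _ hk hl.
  by move=> h1 h2; rewrite -(ltr_pM2l sA); exact: le_lt_trans h2 h1.
have [h hh] := ipcomp cip; exists h => e e0.
have sK : 0 < Num.sqrt `|K| + 1 by rewrite ltr_wpDl // sqrtr_ge0.
have [N hN] := hh _ (divr_gt0 e0 sK); exists N => k hk.
apply: (le_lt_trans (hnB_le _)).
have := hN _ hk; rewrite ltr_pdivlMr // => h1.
have h2 : 0 <= hn (u k - h) by apply: hn_ge0.
have h3 : 0 <= Num.sqrt `|K| by apply: sqrtr_ge0.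
have : Num.sqrt `|K| * hn (u k - h) <= hn (u k - h) * (Num.sqrt `|K| + 1).
  by rewrite mulrC ler_wpM2l // lerDl.
lra.
Qed.

Hypothesis om_up : forall f, (sqint mu (fun x => omega x f) < +oo)%E.
Hypothesis indep : mu_independent mu omega.

Lemma surjT v : L2 mu v -> exists y, {ae mu, forall x, T y x = v x} /\
  Num.sqrt A * hn y <= Num.sqrt (\int[mu]_x (cabs (v x) ^+ 2)).
Proof.
move=> hv.
pose phi z := cintegral mu (fun x => v x * (T z x)^*).
have iphi : forall z, cintegrable mu (fun x => v x * (T z x)^*).
  by move=> z; apply: L2_prod hv (L2J (TL2 _)).
have phil : forall (a : R[i]) z1 z2, phi (a *: z1 + z2) = a^* * phi z1 + phi z2.
  move=> a z1 z2; rewrite /phi.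
  rewrite (@cintegral_ae _ _ _ mu _ (fun t => a^* * (v t * (T z1 t)^*) + v t * (T z2 t)^*)).
  - have i1 := cintZ a^* (iphi z1).
    by rewrite cintegralD ?cintegralZ //.
  - exact: iphi.
  - apply: cmeasD; first apply: cmeasM; first exact: cmeas_cst.
      exact: (cint_meas (iphi _)).
    exact: (cint_meas (iphi _)).
  - apply: filterS (T_lin a z1 z2) => t ->.
    rewrite JD JM mulrDr; congr (_ + _); rewrite mulrA [v t * _]mulrC -mulrA //.
set nv := Num.sqrt (\int[mu]_x (cabs (v x) ^+ 2)).
have phib : forall z, cabs (phi z) <= nv * hnorm Bf z.
  move=> z; apply: le_trans (cabs_cintegral (iphi z)) _.
  rewrite hnB_E.
  rewrite (@eq_Rintegral _ _ _ mu setT (fun x => cabs (v x) * cabs ((T z x)^*))); last first.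
    by move=> x _; rewrite cabsM.
  have := L2_CS hv (L2J (TL2 z)).
  suff -> : \int[mu]_x (cabs ((T z x)^*) ^+ 2) = nT z by [].
  by apply: eq_Rintegral => x _; rewrite cabsJ.
have [y hy] := riesz_exists Bf_l Bf_h Bf_p Bf_complete phil phib.
pose w := fun x => v x - T y x.
have hw : L2 mu w by apply: L2B hv (TL2 y).
have orth : forall z, cintegral mu (fun x => w x * (T z x)^*) = 0.
  move=> z; rewrite /w.
  rewrite (_ : (fun x => _) = (fun x => v x * (T z x)^* - T y x * (T z x)^*)); last first.
    by apply: funext => x; rewrite mulrBl.
  rewrite cintegralB //; last exact: Bf_int.
  by have := hy z; rewrite /Bf /phi => ->; rewrite subrr.
have hxi : {ae mu, forall x, (w x)^* = 0}.
  apply: indep; first exact: cmeasJ hw.1.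
  move=> g.
  have hg : L2 mu (fun x => omega x g) by split; [exact: om_meas|exact: om_up].
  have iwg := L2_prod hw hg.
  have e1 : (fun x => (w x)^* * (omega x g)^*) = (fun x => (w x * omega x g)^*).
    by apply: funext => x; rewrite JM.
  rewrite e1; split; first exact: cintJ.
  rewrite cintegralJ //.
  rewrite (@cintegral_ae _ _ _ mu _ (fun x => w x * (T (iota g) x)^*)) //.
  - by rewrite orth J0.
  - exact: (cint_meas (L2_prod hw (L2J (TL2 _)))).
  - by apply: filterS (T_iota g) => x ->; rewrite JK.
have hae : {ae mu, forall x, T y x = v x}.
  apply: filterS hxi => x h.
  have : w x = 0 by rewrite -[w x]JK h J0.
  by rewrite /w => /eqP; rewrite subr_eq0 => /eqP ->.
exists y; split => //.
apply: le_trans (coerc y) _; rewrite hnB_E /nT.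
rewrite (Rint_ae (L2_rint2 (TL2 y)) (meas_cabs2 hv.1)) //.
by apply: filterS hae => x ->.
Qed.

Variable u : X -> R[i].
Hypothesis hu : forall z, cintegrable mu (fun x => u x * (T z x)^*).
Hypothesis mu_u : cmeasurable u.

Lemma psi_ext (h : H) :
  (forall g, cintegral mu (fun x => u x * (T (iota g) x)^*) = ip h (iota g)) ->
  forall y, cintegral mu (fun x => u x * (T y x)^*) = ip h y.
Proof.
move=> hg y.
have hseq : forall k : nat, exists g : D,
    hn (y - iota g) < (k.+1%:R)^-1 /\
    (k.+1%:R) ^+ 2 * (`|K| * hn (y - iota g) ^+ 2) <= ((2 ^ k.+1)%:R)^-1.
  move=> k.
  have n1 : (k.+1%:R : R) != 0 by rewrite pnatr_eq0.
  have n1' : 0 < (k.+1%:R : R) by rewrite ltr0n.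
  have n2 : 0 < `|K| + 1 by rewrite ltr_wpDl.
  have n3 : 0 < ((2 ^ k.+1)%:R : R) by rewrite ltr0n expn_gt0.
  set t := ((2 ^ k.+1)%:R)^-1 / ((k.+1%:R) ^+ 2 * (`|K| + 1)).
  have t0 : 0 < t by rewrite /t divr_gt0 ?invr_gt0 // mulr_gt0 // exprn_gt0.
  set e := Num.min (Num.sqrt t) (k.+1%:R)^-1.
  have e0 : 0 < e by rewrite /e lt_min sqrtr_gt0 t0 invr_gt0 n1'.
  have [g hg'] := dense y e0; exists g; split.
    by apply: lt_le_trans hg' _; rewrite /e ge_min lexx orbT.
  have hh0 : 0 <= hn (y - iota g) by apply: hn_ge0.
  have hst : hn (y - iota g) <= Num.sqrt t.
    by apply: ltW; apply: lt_le_trans hg' _; rewrite /e ge_min lexx.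
  have h2 : hn (y - iota g) ^+ 2 <= t.
    by rewrite -(sqr_sqrtr (ltW t0)) !expr2; apply: ler_pM.
  have h3 : `|K| * hn (y - iota g) ^+ 2 <= (`|K| + 1) * t.
    by apply: ler_pM => //; [exact: sqr_ge0|rewrite lerDl].
  have h4 : (k.+1%:R) ^+ 2 * ((`|K| + 1) * t) = ((2 ^ k.+1)%:R)^-1.
    have n4 : 0 < 1 + k%:R :> R by have := ler0n R k; lra.
    by rewrite /t; field; rewrite (gt_eqF n3) (gt_eqF n2) (gt_eqF n4).
  by rewrite -h4; apply: ler_wpM2l => //; exact: sqr_ge0.
have [gs hgs] := choice hseq.
pose dd k x := T y x - T (iota (gs k)) x.
have hdL2 : forall k, L2 mu (dd k) by move=> k; apply: L2B; exact: TL2.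
have hdae : forall k, {ae mu, forall x, T (y - iota (gs k)) x = dd k x}.
  move=> k; have e : y - iota (gs k) = (-1) *: iota (gs k) + y by rewrite scaleN1r addrC.
  by apply: filterS (T_lin (-1) (iota (gs k)) y) => x; rewrite e => ->; rewrite /dd mulN1r addrC.
have rd : forall k, (k.+1%:R) ^+ 2 * \int[mu]_x (cabs (dd k x) ^+ 2) <= ((2 ^ k.+1)%:R)^-1.
  move=> k; apply: le_trans (proj2 (hgs k)); apply: ler_wpM2l; first exact: sqr_ge0.
  apply: le_trans (nT_le (y - iota (gs k))); rewrite /nT.
  rewrite (Rint_ae (L2_rint2 (TL2 (y - iota (gs k)))) (meas_cabs2 (hdL2 k).1)) //.
  by apply: filterS (hdae k) => x ->.
pose F k x := (((k.+1%:R) ^+ 2 * cabs (dd k x) ^+ 2)%:E : \bar R).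
have F0 : forall k x, (0 <= F k x)%E.
  by move=> k x; rewrite /F lee_fin mulr_ge0 // sqr_ge0.
have mF : forall k, measurable_fun setT (F k).
  move=> k; apply/measurable_EFinP.
  by apply: measurable_funM => //; exact: meas_cabs2 (hdL2 k).1.
pose S x := (\sum_(k <oo) F k x)%E.
have S0 : forall x, (0 <= S x)%E by move=> x; apply: nneseries_ge0 => k _ _.
have mS : measurable_fun setT S.
  have := @ge0_emeasurable_sum _ _ _ setT F xpredT (fun k x _ _ => F0 k x) (fun k _ => mF k).
  by [].
have iS1 : forall k, (\int[mu]_x F k x <= (1 / (2 ^ k.+1)%:R)%:E)%E.
  move=> k; rewrite /F Rint_EFin; last exact: rintZ (L2_rint2 (hdL2 k)).
  rewrite RintegralZl //; last exact: L2_rint2 (hdL2 k).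
  by rewrite lee_fin div1r; exact: rd.
have iS2 : (\sum_(k <oo) (\int[mu]_x F k x) <= \sum_(k <oo) ((1 / (2 ^ k.+1)%:R)%:E : \bar R))%E.
  apply: lee_nneseries => [k _ _|k _]; last exact: iS1.
  by apply: integral_ge0 => x _; exact: F0.
have iS : (\int[mu]_x S x <= 1%:E)%E.
  rewrite /S (integral_nneseries mu measurableT mF (fun n x _ => F0 n x)).
  exact: (le_trans iS2 (epsilon_trick0 xpredT (@ler01 R))).
have intS : mu.-integrable setT S.
  apply/integrableP; split => //.
  rewrite (_ : (fun x => `|S x|)%E = S); last by apply: funext => x; rewrite gee0_abs.
  by apply: le_lt_trans iS _; exact: ltry.
have Sfin : {ae mu, forall x, S x \is a fin_num}.
  by apply: filterS (integrable_ae measurableT intS) => x; apply.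
pose G x := Num.sqrt (fine (S x)).
have G0 : forall x, 0 <= G x by move=> x; exact: sqrtr_ge0.
have fS0 : forall x, 0 <= fine (S x) by move=> x; apply: fine_ge0.
have mG : measurable_fun setT G.
  rewrite (_ : G = Num.sqrt \o (fine \o S)) //.
  apply: measurableT_comp; first exact: continuous_measurable_fun (@sqrt_continuous R).
  by apply: measurableT_comp.
pose Gc x := (G x)%:C.
have hGc : L2 mu Gc.
  apply: rint2_L2; first exact: cmeasR.
  apply: (eqint (F := fun x => (fine (S x))%:E)).
    by move=> x; rewrite /Gc cabsR ger0_norm // sqr_sqrtr.
  apply: le_integrable intS => //.
    apply/measurable_EFinP; rewrite (_ : (fun x => _) = fine \o S) //.
    by apply: measurableT_comp.
  move=> x _; rewrite /= gee0_abs ?S0 // ger0_norm //.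
  by move: (S0 x); case: (S x) => //= r _; rewrite lee_fin.
have [z [hz _]] := surjT hGc.
have iuG : rint mu (fun x => cabs (u x) * G x).
  apply: (rint_ae (cint_abs (hu z))).
    by apply: measurable_funM => //; exact: meas_cabs.
  by apply: filterS hz => x ->; rewrite cabsM cabsJ /Gc cabsR ger0_norm.
set I := \int[mu]_x (cabs (u x) * G x).
have I0 : 0 <= I by apply: Rintegral_ge0 => x _; rewrite mulr_ge0 // cabs_ge0.
have bnd : forall k, {ae mu, forall x, cabs (u x * (dd k x)^*) <= (k.+1%:R)^-1 * (cabs (u x) * G x)}.
  move=> k; apply: filterS Sfin => x hfin.
  have hterm : (F k x <= S x)%E.
    apply: le_trans (nneseries_lim_ge k.+1 (fun n _ _ => F0 n x)).
    by rewrite big_nat_recr //= leeDr // sume_ge0 // => n _; exact: F0.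
  have h1 : (k.+1%:R) ^+ 2 * cabs (dd k x) ^+ 2 <= G x ^+ 2.
    by rewrite /G sqr_sqrtr // -lee_fin fineK.
  have h2 : k.+1%:R * cabs (dd k x) <= G x.
    by apply: sqrt_le_of_sqr => //; rewrite exprMn.
  have kp : 0 < (k.+1%:R : R) by rewrite ltr0n.
  rewrite cabsM cabsJ mulrCA ler_wpM2l ?cabs_ge0 //.
  by rewrite ler_pdivlMl // mulrC.
have diff : forall k, cabs (cintegral mu (fun x => u x * (T y x)^*) -
    cintegral mu (fun x => u x * (T (iota (gs k)) x)^*)) <= (k.+1%:R)^-1 * I.
  move=> k; rewrite -cintegralB //.
  have e : (fun x => u x * (T y x)^* - u x * (T (iota (gs k)) x)^*) =
           (fun x => u x * (dd k x)^*) by apply: funext => x; rewrite /dd JB mulrBr.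
  rewrite e; have icd : cintegrable mu (fun x => u x * (dd k x)^*).
    by rewrite -e; apply: cintB.
  apply: le_trans (cabs_cintegral icd) _.
  rewrite -RintegralZl //; apply: Rint_le_ae => //.
    exact: cint_abs icd.
  exact: rintZ.
have hn0 := hn_ge0 ipl ipc ipp h.
have diff2 : forall k, cabs (ip h y - ip h (iota (gs k))) <= hn h * (k.+1%:R)^-1.
  move=> k; rewrite -(bBr ipl ipc ipp); apply: le_trans (CS ipl ipc ipp _ _) _.
  by rewrite ler_wpM2l //; exact: ltW (proj1 (hgs k)).
have key : forall k, cabs (cintegral mu (fun x => u x * (T y x)^*) - ip h y) <= (I + hn h) * (k.+1%:R)^-1.
  move=> k.
  have e : cintegral mu (fun x => u x * (T y x)^*) - ip h y =
    (cintegral mu (fun x => u x * (T y x)^*) - cintegral mu (fun x => u x * (T (iota (gs k)) x)^*))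
    - (ip h y - ip h (iota (gs k))).
    by rewrite hg; ring.
  rewrite e; apply: le_trans (cabsD _ _) _; rewrite cabsN mulrDl.
  by apply: lerD; [rewrite mulrC; exact: diff|exact: diff2].
have z0 : cabs (cintegral mu (fun x => u x * (T y x)^*) - ip h y) <= 0.
  apply: (@le_of_eps _ _ _ (I + hn h)); first by rewrite addr_ge0.
  move=> e e0; have [N hN] := archi_inv e0.
  rewrite add0r; apply: le_trans (key N) _.
  by rewrite ler_wpM2l ?addr_ge0 // ltW.
apply/eqP; rewrite -subr_eq0; apply/eqP; apply: cabs_eq0.
by apply/eqP; rewrite eq_le z0 cabs_ge0.
Qed.
End Anal.

Lemma meas_inv_pos {R : realType} {d : measure_display} {X : measurableType d}
  (g : X -> R) (c : R) : 0 < c -> measurable_fun setT g -> (forall x, c <= g x) ->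
  measurable_fun setT (fun x => (g x)^-1).
Proof.
move=> c0 mg hg; rewrite (_ : (fun x => _) = GRing.inv \o g) //.
apply: (measurable_comp (F := [set r : R | r != 0])) => //.
- exact: open_measurable.
- move=> _ [x _ <-] /=; apply/negP => /eqP h0; have := hg x; rewrite h0.
  by rewrite leNgt c0.
- apply: open_continuous_measurable_fun => //; apply/in_setP => x /= x0.
  exact: inv_continuous.
Qed.

Lemma phase_id {R : realType} (mz az : R[i]) :
  cabs mz != 0 ->
  (mz * az) * (((cabs mz)^-1)%:C * mz * az)^* = (cabs mz * cabs az ^+ 2)%:C.
Proof.
move=> h; rewrite !JM JR.
have -> : mz * az * ((cabs mz)^-1%:C * mz^* * az^*) =
   (mz * mz^*) * (az * az^*) * ((cabs mz)^-1)%:C by ring.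
rewrite !mulJ -!rmorphM /=; congr (_%:C).
by field.
Qed.

Section Final.
Context {R : realType} {D H : lmodType R[i]} {d : measure_display} {X : measurableType d}.
Variables (ip : H -> H -> R[i]) (iota : D -> H) (mu : {measure set X -> \bar R}).
Hypothesis ipl : forall (a : R[i]) x y z, ip (a *: x + y) z = a * ip x z + ip y z.
Hypothesis ipc : forall x y, ip y x = (ip x y)^*.
Hypothesis ipp : forall x, 0 <= ip x x.
Hypothesis ipcomp : forall u : nat -> H,
    (forall e : R, 0 < e -> exists N, forall k l, (N <= k)%N -> (N <= l)%N ->
        hnorm ip (u k - u l) < e) ->
    exists h : H, forall e : R, 0 < e -> exists N, forall k, (N <= k)%N ->
        hnorm ip (u k - h) < e.
Hypothesis dense : forall h (e : R), 0 < e -> exists f, hnorm ip (h - iota f) < e.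
Variables (omega theta : X -> D -> R[i]) (Tw Tt : H -> X -> R[i]).
Variables (Aw At Kw Kt C : R) (m : X -> R[i]).
Hypothesis Aw0 : 0 < Aw.
Hypothesis At0 : 0 < At.
Hypothesis omm : forall f, cmeasurable (fun x => omega x f).
Hypothesis thm : forall f, cmeasurable (fun x => theta x f).
Hypothesis omlow : forall f, ((Aw * hnorm ip (iota f) ^+ 2)%:E <= sqint mu (fun x => omega x f))%E.
Hypothesis thlow : forall f, ((At * hnorm ip (iota f) ^+ 2)%:E <= sqint mu (fun x => theta x f))%E.
Hypothesis thup : forall f, (sqint mu (fun x => theta x f) < +oo)%E.
Hypothesis indt : mu_independent mu theta.
Hypothesis Tw1 : forall f, {ae mu, forall x, Tw (iota f) x = (omega x f)^*}.
Hypothesis Tw2 : forall h, cmeasurable (Tw h).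
Hypothesis Twb : forall h, (sqint mu (Tw h) <= (Kw * hnorm ip h ^+ 2)%:E)%E.
Hypothesis Tw4 : forall (a : R[i]) h1 h2, {ae mu, forall x, Tw (a *: h1 + h2) x = a * Tw h1 x + Tw h2 x}.
Hypothesis Tt1 : forall f, {ae mu, forall x, Tt (iota f) x = (theta x f)^*}.
Hypothesis Tt2 : forall h, cmeasurable (Tt h).
Hypothesis Ttb : forall h, (sqint mu (Tt h) <= (Kt * hnorm ip h ^+ 2)%:E)%E.
Hypothesis Tt4 : forall (a : R[i]) h1 h2, {ae mu, forall x, Tt (a *: h1 + h2) x = a * Tt h1 x + Tt h2 x}.
Hypothesis mm : cmeasurable m.
Hypothesis hint : forall f g : H, cintegrable mu (fun x => m x * Tw f x * (Tt g x)^*).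
Hypothesis C0 : 0 < C.
Hypothesis Cm : forall x, C <= cabs (m x).
Local Notation Re := complex.Re.
Local Notation Im := complex.Im.
Local Notation hn := (hnorm ip).

Lemma main_bound (f : D) (h : H) :
  is_mult_value ip iota mu m omega theta f h ->
  C * Num.sqrt At * Num.sqrt Aw * hn (iota f) <= hn h.
Proof.
move=> hmv.
pose u x := m x * Tw (iota f) x.
have mu_u : cmeasurable u by apply: cmeasM.
have hu : forall z, cintegrable mu (fun x => u x * (Tt z x)^*) by move=> z; exact: hint.
have hpsi := psi_ext ipl ipc ipp ipcomp At0 thm thlow Tt1 Tt2 Ttb Tt4 dense thup indt hu mu_u.
have hpsi' : forall y, cintegral mu (fun x => u x * (Tt y x)^*) = ip h y.
  apply: hpsi => g; rewrite hmv.
  apply: cintegral_ae => //.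
    apply: cmeasM; first by apply: cmeasM => //; exact: cmeasJ.
    exact: thm.
  apply: filterS2 (Tw1 f) (Tt1 g) => x h1 h2.
  by rewrite /u h1 h2 JK.
pose a := Tw (iota f).
have ha : L2 mu a := TL2 ipl ipc ipp ipcomp Aw0 omm omlow Tw1 Tw2 Twb Tw4 dense (iota f).
set na2 := \int[mu]_x (cabs (a x) ^+ 2).
have na20 : 0 <= na2 by exact: sq_ge0_int.
have hAw : Aw * hn (iota f) ^+ 2 <= na2.
  exact: (nT_iota ipl ipc ipp ipcomp Aw0 omm omlow Tw1 Tw2 Twb Tw4 dense f).
pose q x := ((cabs (m x))^-1)%:C * m x.
have mpos : forall x, 0 < cabs (m x) by move=> x; exact: lt_le_trans C0 (Cm x).
have cq : forall x, cabs (q x) = 1.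
  by move=> x; rewrite /q cabsM cabsR ger0_norm ?invr_ge0 ?cabs_ge0 // mulVf // gt_eqF.
have mq : cmeasurable q.
  apply: cmeasM => //; apply: cmeasR.
  by apply: (meas_inv_pos C0) => //; exact: meas_cabs.
pose bb x := q x * a x.
have cbb : forall x, cabs (bb x) = cabs (a x) by move=> x; rewrite cabsM cq mul1r.
have hbb : L2 mu bb.
  apply: rint2_L2; first exact: (cmeasM mq ha.1).
  by have := L2_rint2 ha; apply: eqint => x; rewrite cbb.
have [y [hy ny]] := surjT ipl ipc ipp ipcomp At0 thm thlow Tt1 Tt2 Ttb Tt4 dense thup indt hbb.
have ebb : \int[mu]_x (cabs (bb x) ^+ 2) = na2.
  by apply: eq_Rintegral => x _; rewrite cbb.
rewrite ebb in ny.
have epsi : cintegral mu (fun x => u x * (Tt y x)^*) =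
    cintegral mu (fun x => (cabs (m x) * cabs (a x) ^+ 2)%:C).
  apply: cintegral_ae => //.
    apply: cmeasR; apply: measurable_funM; first exact: meas_cabs.
    exact: meas_cabs2 ha.1.
  apply: filterS hy => x ->; rewrite /u /bb /q -/a.
  by rewrite phase_id // gt_eqF.
have ipos : rint mu (fun x => cabs (m x) * cabs (a x) ^+ 2).
  have := (cint_ae (hu y) (cmeasR (measurable_funM (meas_cabs mm) (meas_cabs2 ha.1))) _).1.
  apply.
  apply: filterS hy => x ->; rewrite /u /bb /q -/a.
  by rewrite phase_id // gt_eqF.
have low : C * na2 <= Re (ip h y).
  rewrite -hpsi' epsi cintegral_real /= -RintegralZl //; last exact: L2_rint2 ha.
  apply: le_Rintegral => //.
    exact: rintZ (L2_rint2 ha).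
  by move=> x _; rewrite ler_wpM2r ?sqr_ge0.
have up : Re (ip h y) <= hn h * hn y.
  apply: le_trans (ler_norm _) _; apply: le_trans (Re_le_cabs _) _.
  exact: CS ipl ipc ipp h y.
set s := Num.sqrt na2.
have s0 : 0 <= s by apply: sqrtr_ge0.
have ss : s ^+ 2 = na2 by rewrite sqr_sqrtr.
have sA : 0 < Num.sqrt At by rewrite sqrtr_gt0.
have sW : 0 < Num.sqrt Aw by rewrite sqrtr_gt0.
have hf0 : 0 <= hn (iota f) by apply: hn_ge0.
have hh0 : 0 <= hn h by apply: hn_ge0.
have hy0 : 0 <= hn y by apply: hn_ge0.
have h1 : Num.sqrt Aw * hn (iota f) <= s.
  apply: sqrt_le_of_sqr => //; rewrite exprMn sqr_sqrtr ?(ltW Aw0) // ss //.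
have h2 : C * Num.sqrt At * s <= hn h.
  have [s00|sp] := eqVneq s 0.
    by rewrite s00 mulr0.
  have sp' : 0 < s by rewrite lt_def sp s0.
  have h3 : C * s ^+ 2 <= hn h * hn y by rewrite ss; exact: le_trans low up.
  have h4 : C * s ^+ 2 * Num.sqrt At <= hn h * s.
    apply: le_trans (_ : hn h * hn y * Num.sqrt At <= _).
      by rewrite ler_wpM2r // ltW.
    by rewrite -mulrA ler_wpM2l // mulrC.
  rewrite -(ler_pM2r sp').
  by have -> : C * Num.sqrt At * s * s = C * s ^+ 2 * Num.sqrt At by ring.
apply: le_trans h2.
have -> : C * Num.sqrt At * Num.sqrt Aw * hn (iota f) =
  (C * Num.sqrt At) * (Num.sqrt Aw * hn (iota f)) by ring.
by rewrite ler_wpM2l // mulr_ge0 // ltW.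
Qed.
End Final.

Lemma JN1 {R : realType} : (-1 : R[i])^* = -1.
Proof. by apply: cx_eq; [rewrite cReJ|rewrite cImJ /= !oppr0]. Qed.

Unset Implicit Arguments.
Local Close Scope complex_scope.
Local Open Scope ring_scope.
Local Open Scope classical_set_scope.
Theorem proposition5p5 (R : realType) (D H : lmodType R[i])
  (p : nat -> D -> R) (ip : H -> H -> R[i]) (iota : D -> H)
  (d : measure_display) (X : measurableType d) (mu : {measure set X -> \bar R})
  (omega theta : X -> D -> R[i]) (Tomega Ttheta : H -> X -> R[i])
  (m : X -> R[i]) (C : R) :
  is_rigged p ip iota ->
  is_reflexive p ->
  sigma_finite setT mu ->
  is_riesz_distribution_basis p ip iota mu omega ->
  is_riesz_distribution_basis p ip iota mu theta ->
  is_analysis_extension ip iota mu omega Tomega ->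
  is_analysis_extension ip iota mu theta Ttheta ->
  cmeasurable m ->
  (forall f g : H, cintegrable mu (fun x => m x * Tomega f x * (Ttheta g x)^*)) ->
  0 < C ->
  (forall x, C <= cabs (m x)) ->
  (forall (f1 f2 : D) (h : H),
     in_mult_domain ip iota mu m omega theta f1 ->
     in_mult_domain ip iota mu m omega theta f2 ->
     is_mult_value ip iota mu m omega theta f1 h ->
     is_mult_value ip iota mu m omega theta f2 h -> f1 = f2) /\
  exists c : R, 0 < c /\
    forall (f : D) (h : H),
      in_mult_domain ip iota mu m omega theta f ->
      is_mult_value ip iota mu m omega theta f h ->
      c * hnorm ip (iota f) <= hnorm ip h.
Proof.
move=> [[[[ipl ipc ipp ipdef] ipcomp] _] iotal iotaI dense _] _ _.
move=> [[omcd omm [Aw [Bw [Aw0 Bw0 fw]]]] _] [[thcd thm [At [Bt [At0 Bt0 ft]]]] indt].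
move=> [Tw1 Tw2 [Kw Twb] Tw4] [Tt1 Tt2 [Kt Ttb] Tt4] mm hint C0 Cm.
have thup : forall f, (sqint mu (fun x => theta x f) < +oo)%E.
  by move=> f; apply: le_lt_trans (proj2 (ft f)) _; exact: ltry.
have omlow : forall f, ((Aw * hnorm ip (iota f) ^+ 2)%:E <= sqint mu (fun x => omega x f))%E.
  by move=> f; exact: (proj1 (fw f)).
have thlow : forall f, ((At * hnorm ip (iota f) ^+ 2)%:E <= sqint mu (fun x => theta x f))%E.
  by move=> f; exact: (proj1 (ft f)).
have MB := main_bound ipl ipc ipp ipcomp dense Aw0 At0 omm thm omlow thlow thup indt
  Tw1 Tw2 Twb Tw4 Tt1 Tt2 Ttb Tt4 mm hint C0 Cm.
have c0 : 0 < C * Num.sqrt At * Num.sqrt Aw.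
  by rewrite !mulr_gt0 // sqrtr_gt0.
split; last first.
  by exists (C * Num.sqrt At * Num.sqrt Aw); split => // f h _ v; exact: MB.
move=> f1 f2 h [i1 _] [i2 _] v1 v2.
have ef : f1 - f2 = (-1) *: f2 + f1 by rewrite scaleN1r addrC.
have v0 : is_mult_value ip iota mu m omega theta (f1 - f2) 0.
  move=> g; rewrite (b0l ipl ipc ipp).
  have e : mult_integrand m omega theta (f1 - f2) g =
      (fun x => mult_integrand m omega theta f1 g x - mult_integrand m omega theta f2 g x).
    apply: funext => x; rewrite /mult_integrand ef (proj1 (omcd x)) JN1.
    rewrite JD JM JN1; ring.
  by rewrite e cintegralB // -v1 -v2 subrr.
have := MB _ _ v0; rewrite (hn0 ipl ipc ipp) => hb.
have hz : hnorm ip (iota (f1 - f2)) = 0.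
  apply/eqP; rewrite eq_le (hn_ge0 ipl ipc ipp) andbT.
  by rewrite -(pmulr_rle0 _ c0).
have z : iota (f1 - f2) = 0.
  apply: ipdef; rewrite (bxx ipl ipc ipp) -(hnE ipl ipc ipp) hz.
  by rewrite expr0n.
apply: iotaI; apply/eqP; rewrite -subr_eq0; apply/eqP.
by move: z; rewrite ef iotal scaleN1r addrC.
Qed.
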